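(* If $G$ is a finite group, then $S(G) = F(G)$.
   Context: $S(G) := \{ x \in G : x^{|G:H|} \in H \text{ for every subgroup } H \leqslant G \text{ of finite index}\}$. $F(G)$ is the Fitting subgroup of $G$, i.e. its largest nilpotent normal subgroup. *)

(* Defs.v *)
From mathcomp Require Import all_boot all_fingroup all_solvable.
Set Implicit Arguments. Unset Strict Implicit. Unset Printing Implicit Defensive.
Local Open Scope group_scope.

(* S(G) = { x in G : x ^ |G:H| \in H for every subgroup H of G (of finite
   index -- automatic for finite G) }. *)
Definition Sgroup (gT : finGroupType) (G : {set gT}) : {set gT} :=
  [set x in G | [forall H : {group gT}, (H \subset G) ==> (x ^+ #|G : H| \in H)]].

(* Main.v *)
Require Import Defs.
From mathcomp Require Import all_boot all_fingroup all_solvable.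
Set Implicit Arguments. Unset Strict Implicit. Unset Printing Implicit Defensive.
Local Open Scope group_scope.

Lemma normal_pow (gT : finGroupType) (K L : {group gT}) z :
  L \subset 'N(K) -> z \in L -> z ^+ #|L : K| \in K.
Proof.
move=> nKL Lz.
have nz : z \in 'N(K) by apply: (subsetP nKL).
apply: coset_idr; first by rewrite groupX.
rewrite morphX //.
rewrite -card_quotient //.
by apply: expg_cardG; apply: mem_quotient.
Qed.

Lemma nil_pow (gT : finGroupType) (F : {group gT}) :
  nilpotent F -> forall K : {group gT}, K \subset F ->
  forall x, x \in F -> x ^+ #|F : K| \in K.
Proof.
move=> nilF K.
have [m] := ubnP (#|F| - #|K|).
elim: m K => // m IHm K /ltnSE-lem sKF x Fx.
have [eqKF | neKF] := eqVneq K F.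
  by rewrite eqKF indexgg expg1.
have prKF : K \proper F by rewrite properEneq neKF sKF.
have prKL := nilpotent_proper_norm nilF prKF.
set L := 'N_F(K)%G.
have sLF : L \subset F by apply: subsetIl.
have sKL : K \subset L by apply: proper_sub.
have ltKL : #|K| < #|L| by apply: proper_card.
have leLF : #|L| <= #|F| by apply: subset_leq_card.
have Lz : x ^+ #|F : L| \in L.
  apply: IHm => //.
  apply: leq_trans lem; rewrite ltn_sub2l //.
  by apply: leq_trans leLF.
rewrite -(Lagrange_index sLF sKL) expgM.
by apply: normal_pow => //; apply: subsetIr.
Qed.

Theorem proposition5p1 (gT : finGroupType) (G : {group gT}) :
  Sgroup G = 'F(G).
Proof.
apply/setP => x; apply/idP/idP.
- rewrite inE => /andP[Gx /forallP hx].
  rewrite -(prod_constt x); apply: group_prod => p _.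
  have Op : x.`_p \in 'O_p(G).
    rewrite /pcore; apply/bigcapP => M maxM.
    have sylM : p.-Sylow(G) M by rewrite -max_pgroup_Sylow.
    case/and3P: (sylM) => sMG pM p'idx.
    have hM := hx M; rewrite sMG /= in hM.
    have yin : x.`_p ^+ #|G : M| \in M.
      rewrite -consttX; apply: (subsetP _ _ (cycle_constt p _)).
      by rewrite cycle_subG.
    have cop : coprime #[x.`_p] #|G : M|.
      exact: pnat_coprime (p_elt_constt p x) p'idx.
    rewrite -generator_coprime /generator in cop.
    rewrite -cycle_subG -(eqP cop) in yin.
    by apply: (subsetP yin); apply: cycle_id.
  rewrite -p_core_Fitting in Op.
  exact: (subsetP (pcore_sub _ _)) _ Op.
- move=> Fx.
  have Gx : x \in G by apply: (subsetP (Fitting_sub G)).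
  rewrite inE Gx; apply/forallP => H; apply/implyP => sHG.
  have nFG := Fitting_normal G.
  have sKF : ('F(G) :&: H)%G \subset 'F(G) by apply: subsetIl.
  have hK := nil_pow (Fitting_nil G) sKF Fx.
  have dv : #|'F(G) : ('F(G) :&: H)%G| %| #|G : H|.
    rewrite /= indexgI -indexMg.
    have nFH : H \subset 'N('F(G)).
      by apply: subset_trans sHG (normal_norm nFG).
    rewrite -(norm_joinEl nFH).
    have sJG : H <*> 'F(G) \subset G by rewrite join_subG sHG Fitting_sub.
    rewrite -(Lagrange_index sJG (joing_subl _ _)).
    exact: dvdn_mull.
  case/dvdnP: dv => k ->.
  rewrite mulnC expgM groupX //.
  by apply: (subsetP (subsetIr 'F(G) H)).
Qed.
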